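(* On $\mathbf W$ we have $p^\perp(\mathcal X)\,h^\perp_{D-1}(\mathcal X)=0$, where $p^\perp(\eta)=\eta^{-1}(\eta-\tau)(\eta-\tau^{-1}q^{-D})$ and $h^\perp_{D-1}(\eta)=\eta^{1-D}\prod_{n=1}^{D-1}(\eta-\tau q^n)(\eta-\tau^{-1}q^{-n})$ with $\tau=\sqrt{-1}\,q^{-(D+e)/2}$.
   Context: Dual polar graph setting: $q$ a prime power, $D\ge3$; $\mathbb V$ one of: $2D$-dim. over $\mathbb F_q$ with non-degenerate alternating form ($e=1$); $(2D+1)$-dim. quadratic ($e=1$); $2D$-dim. quadratic of Witt index $D$ ($e=0$); $(2D+2)$-dim. quadratic of Witt index $D$ ($e=2$); $(2D+1)$-dim. Hermitian, $q=r^2$ ($e=3/2$); $2D$-dim. Hermitian, $q=r^2$ ($e=1/2$). $X$ is the set of maximal isotropic subspaces, $\Gamma$ the graph on $X$ with $y\sim z$ iff $\dim(y\cap z)=D-1$, $\partial$ path-length distance, $\Gamma_i(y)=\{z:\partial(y,z)=i\}$. Fix a vertex $x$ and maximal clique $C\ni x$; for $0\le i\le D-1$, $C_i=\{y:\min_{z\in C}\partial(y,z)=i\}$, $C_i^-=\Gamma_i(x)\cap C_i$, $C_i^+=\Gamma_{i+1}(x)\cap C_i$. In $V=\mathbb C^X$, $\hat Y$ is the characteristic vector of $Y$; $\mathbf W=\operatorname{span}\{\hat C_i^\pm\}$ with ordered basis $(\hat C_0^-,\hat C_0^+,\dots,\hat C_{D-1}^-,\hat C_{D-1}^+)$. Define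 $2\times2$ matrices $t(i)=\begin{pmatrix} q^{-e/2}-q^{e/2} & q^{e/2}\\ q^{-e/2}&0\end{pmatrix}$ ($0\le i\le D-1$), $t'(i)=\sqrt{-1}\begin{pmatrix} q^{-D/2}(q^D-q^i+1) & q^{D/2}(q^{i-D}-1)\\ q^{-D/2}(1-q^i) & q^{i-D/2}\end{pmatrix}$ ($1\le i\le D-1$), and $t'(0)=t'(D)=(\sqrt{-1}\,q^{-D/2})$; $\mathfrak t=\operatorname{blockdiag}(t(0),\dots,t(D-1))$, $\mathfrak t'=\operatorname{blockdiag}(t'(0),\dots,t'(D))$. $\mathcal X$ is the invertible operator on $\mathbf W$ with matrix $\mathfrak t'\mathfrak t$ in the ordered basis above. *)

(* Defs.v *)
From mathcomp Require Import all_boot all_order all_algebra all_field.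
Unset Printing Implicit Defensive.
Import Order.TTheory GRing.Theory Num.Theory.
Local Open Scope ring_scope.

(* Parameters: q (prime power), D, and e2 = 2e in {0,1,2,3,4}
   (e in {0,1/2,1,3/2,2}).  qp q k = q^(k/4) (positive real 4th root). *)
Definition qp (q : nat) (k : int) : algC := (4.-root (q%:R : algC)) ^ k.

(* entries of t(i) (independent of i), positions a,b : bool (false = 1st) *)
Definition t_ent (q e2 : nat) (a b : bool) : algC :=
  match a, b with
  | false, false => qp q (- (e2%:Z)) - qp q e2
  | false, true => qp q e2
  | true, false => qp q (- (e2%:Z))
  | true, true => 0
  end.

Definition tp_ent (q D k : nat) (a b : bool) : algC :=
  if (k == 0)%N || (k == D) then 'i * qp q (- (2 * D)%:Z) else
  'i * match a, b with
  | false, false => qp q (- (2 * D)%:Z) * ((q%:R) ^+ D - (q%:R) ^+ k + 1)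
  | false, true => qp q ((2 * D)%:Z) * ((q%:R : algC) ^ (k%:Z - D%:Z) - 1)
  | true, false => qp q (- (2 * D)%:Z) * (1 - (q%:R) ^+ k)
  | true, true => qp q ((4 * k)%:Z - (2 * D)%:Z)
  end.

(* ordered basis indices 0..2D-1: index 2i is C_i^-, 2i+1 is C_i^+ *)
(* frak t = blockdiag(t(0),...,t(D-1)): block of index j is j/2, position odd j *)
Definition tmat (q D e2 : nat) : 'M[algC]_(D.*2) :=
  \matrix_(i, j) if (i./2 == j./2)%N then t_ent q e2 (odd i) (odd j) else 0.

(* frak t' = blockdiag(t'(0) [1x1], t'(1),...,t'(D-1) [2x2], t'(D) [1x1]):
   block of index j is (j+1)/2; within a 2x2 block, index 2k-1 is the first
   position and 2k the second, i.e. position = ~~ odd j. *)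
Definition tpmat (q D : nat) : 'M[algC]_(D.*2) :=
  \matrix_(i, j) if (i.+1./2 == j.+1./2)%N
                 then tp_ent q D (i.+1./2) (~~ odd i) (~~ odd j) else 0.

Definition Xmat (q D e2 : nat) : 'M[algC]_(D.*2) := tpmat q D *m tmat q D e2.

Definition tau (q D e2 : nat) : algC := 'i * qp q (- (2 * D + e2)%:Z).

Definition p_perp (q D e2 : nat) (X : 'M[algC]_(D.*2)) : 'M[algC]_(D.*2) :=
  invmx X * ((X - (tau q D e2)%:M) * (X - ((tau q D e2)^-1 * (q%:R)^-D)%:M)).

Definition h_perp (q D e2 : nat) (X : 'M[algC]_(D.*2)) : 'M[algC]_(D.*2) :=
  invmx X ^+ (D - 1) *
  \prod_(1 <= n < D) ((X - (tau q D e2 * (q%:R) ^+ n)%:M) *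
                      (X - ((tau q D e2)^-1 * (q%:R) ^- n)%:M)).

Definition prime_power (q : nat) : Prop :=
  exists p k : nat, prime p /\ (0 < k)%N /\ q = (p ^ k)%N.

(* Main.v *)
Require Import Defs.
From mathcomp Require Import all_boot all_order all_algebra all_field.
From mathcomp Require Import zify ring.
Import GRing.Theory Num.Theory.
Local Open Scope ring_scope.

Section Main.
Variables (q D e2 : nat).
Hypothesis q_gt1 : (1 < q)%N.
Hypothesis D_gt0 : (0 < D)%N.

Definition Q : algC := q%:R.
Definition r4 : algC := 4.-root Q.
Definition w : algC := Q^-1.
Definition hh : algC := qp q e2%:Z.
Definition rho : algC := r4 ^+ (2 * D).
Definition cc : algC := 'i * rho^-1.

Lemma Q_neq0 : Q != 0.
Proof. by rewrite /Q pnatr_eq0 -lt0n ltnW. Qed.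
Lemma r4_neq0 : r4 != 0.
Proof. by rewrite /r4 rootC_eq0 // Q_neq0. Qed.
Lemma r4_4 : r4 ^+ 4 = Q.
Proof. by rewrite /r4 rootCK. Qed.
Lemma hh_neq0 : hh != 0.
Proof. by rewrite /hh /qp expfz_neq0 // -/Q -/r4 r4_neq0. Qed.
Lemma rho_neq0 : rho != 0.
Proof. by rewrite expf_neq0 // r4_neq0. Qed.
Lemma rho2 : rho ^+ 2 = Q ^+ D.
Proof. by rewrite /rho -exprM mulnC mulnA -r4_4 -exprM. Qed.
Lemma w_neq0 : w != 0.
Proof. by rewrite invr_eq0 Q_neq0. Qed.
Lemma Qw : Q = w^-1.
Proof. by rewrite /w invrK. Qed.

Lemma qp_neg (k : nat) : qp q (- k%:Z) = (qp q k%:Z)^-1.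
Proof. by rewrite /qp invr_expz. Qed.
Lemma qp_nat (k : nat) : qp q k%:Z = r4 ^+ k.
Proof. by []. Qed.

Definition nE (a b : bool) : algC :=
  match a, b with
  | false, false => 1 - hh ^+ 2
  | false, true => hh ^+ 2
  | true, false => 1
  | true, true => 0
  end.

Lemma t_entE a b : t_ent q e2 a b = hh^-1 * nE a b.
Proof.
have h0 := hh_neq0.
case: a; case: b; rewrite /t_ent /nE ?qp_neg -/hh //=; try field => //.
Qed.

Definition mE (k : nat) (a b : bool) : algC :=
  if (k == 0)%N || (k == D) then 1 else
  match a, b with
  | false, false => Q ^+ D - Q ^+ k + 1
  | false, true => Q ^+ k - Q ^+ D
  | true, false => 1 - Q ^+ k
  | true, true => Q ^+ k
  end.

Lemma tp_entE k a b : tp_ent q D k a b = cc * mE k a b.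
Proof.
rewrite /tp_ent /mE /cc.
have hneg : qp q (- (2 * D)%:Z) = rho^-1 by rewrite qp_neg.
case: ifP => _; first by rewrite hneg mulr1.
have r0 := rho_neq0; have Q0 := Q_neq0.
case: a; case: b; rewrite ?hneg -/Q.
- have -> : qp q ((4 * k)%:Z - (2 * D)%:Z) = Q ^+ k * rho^-1.
    rewrite /qp expfzDr ?r4_neq0 // -/r4 -exprnN.
    have e : forall x (m : nat), x ^ (m%:Z) = x ^+ m :> algC by [].
    by rewrite e exprM r4_4.
  ring.
- by rewrite mulrA.
- rewrite qp_nat -/rho.
  have -> : Q ^ (k%:Z - D%:Z) = Q ^+ k * (Q ^+ D)^-1.
    by rewrite expfzDr // -exprnN.
  rewrite -rho2; field.
  by rewrite r0.
- by rewrite mulrA.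
Qed.


Definition Nm : 'M[algC]_(D.*2) :=
  \matrix_(i, j) if (i./2 == j./2)%N then nE (odd i) (odd j) else 0.
Definition Mm : 'M[algC]_(D.*2) :=
  \matrix_(i, j) if (i.+1./2 == j.+1./2)%N
                 then mE (i.+1./2) (~~ odd i) (~~ odd j) else 0.

Lemma tmatE : tmat q D e2 = hh^-1 *: Nm.
Proof.
apply/matrixP => i j; rewrite !mxE; case: ifP => _; rewrite ?t_entE ?mulr0 //.
Qed.

Lemma tpmatE : tpmat q D = cc *: Mm.
Proof.
apply/matrixP => i j; rewrite !mxE; case: ifP => _; rewrite ?tp_entE ?mulr0 //.
Qed.

Lemma sum1 (N : nat) (F : nat -> algC) c1 : (c1 < N)%N ->
  (forall c, (c < N)%N -> c != c1 -> F c = 0) -> \sum_(c < N) F c = F c1.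
Proof.
move=> h1 hF; rewrite (bigD1 (Ordinal h1)) //= big1 ?addr0 // => c hc.
apply: hF => //; by rewrite -(inj_eq val_inj) in hc.
Qed.

Lemma sum2 (N : nat) (F : nat -> algC) c1 c2 : (c1 < N)%N -> (c2 < N)%N ->
  c1 != c2 ->
  (forall c, (c < N)%N -> c != c1 -> c != c2 -> F c = 0) ->
  \sum_(c < N) F c = F c1 + F c2.
Proof.
move=> h1 h2 ne hF; rewrite (bigD1 (Ordinal h1)) //= (bigD1 (Ordinal h2)) /=; last first.
  by rewrite -(inj_eq val_inj) /= eq_sym.
rewrite big1 ?addr0 // => c /andP[hc1 hc2].
apply: hF => //; by rewrite -(inj_eq val_inj) in hc1 hc2 *.
Qed.

Lemma half21 n : (n.*2.+1)./2 = n.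
Proof. by rewrite -divn2 -muln2; lia. Qed.

Definition cv (f : nat -> algC) : 'cV[algC]_(D.*2) := \col_(r < D.*2) f r.

Lemma Nm_mul f (r : 'I_(D.*2)) : (Nm *m cv f) r 0 =
  nE (odd r) false * f (r./2.*2) + nE (odd r) true * f (r./2.*2.+1).
Proof.
case: r => r hr /=.
rewrite mxE.
under eq_bigr do rewrite !mxE.
rewrite (@sum2 (D.*2) (fun c => (if (r./2 == c./2)%N then nE (odd r) (odd c) else 0) * f c)
   (r./2.*2) (r./2.*2.+1)).
- by rewrite doubleK half21 eqxx /= odd_double.
- move: hr; rewrite -!divn2 -!muln2; lia.
- move: hr; rewrite -!divn2 -!muln2; lia.
- by rewrite -!muln2; lia.
- move=> c hc h1 h2; case: eqP; rewrite ?mul0r // => e.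
  exfalso; move: h1 h2 e; rewrite -!divn2 -!muln2; lia.
Qed.

Lemma Mm_mul f (r : 'I_(D.*2)) : (Mm *m cv f) r 0 =
  if ((r.+1./2 == 0) || (r.+1./2 == D))%N then f r
  else mE (r.+1./2) (~~ odd r) false * f (r.+1./2.*2.-1)
     + mE (r.+1./2) (~~ odd r) true * f (r.+1./2.*2).
Proof.
case: r => r hr /=.
rewrite mxE.
under eq_bigr do rewrite !mxE.
case: ifP => hk.
  rewrite (@sum1 (D.*2) (fun c => (if (r.+1./2 == c.+1./2)%N then mE r.+1./2 (~~ odd r) (~~ odd c) else 0) * f c) r) //.
    by rewrite eqxx /mE hk mul1r.
  move=> c hc hne; case: eqP; rewrite ?mul0r // => e.
  exfalso; move: hk hc hr hne e; rewrite -!divn2 -!muln2; lia.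
rewrite (@sum2 (D.*2) (fun c => (if (r.+1./2 == c.+1./2)%N then mE r.+1./2 (~~ odd r) (~~ odd c) else 0) * f c)
   (r.+1./2.*2.-1) (r.+1./2.*2)).
- rewrite -[uphalf r]/(r.+1./2).
  move/norP: hk => [hk0 hkD].
  move: hk0; set k := r.+1./2 => hk0.
  have -> : (k.*2.-1).+1 = k.*2 by move: hk0; rewrite -!muln2; lia.
  have hodd : odd (k.*2.-1).
    have -> : k.*2.-1 = (k.-1).*2.+1 by move: hk0; rewrite -!muln2; lia.
    by rewrite /= odd_double.
  by rewrite doubleK half21 eqxx hodd odd_double.
- move: hk hr; rewrite -!divn2 -!muln2; lia.
- move: hk hr; rewrite -!divn2 -!muln2; lia.
- move: hk; rewrite -!divn2 -!muln2; lia.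
- move=> c hc h1 h2; case: eqP; rewrite ?mul0r // => e.
  exfalso; move: h1 h2 e; rewrite -!divn2 -!muln2; lia.
Qed.

Lemma odd21 n : odd (n.*2.+1) = true.
Proof. by rewrite /= odd_double. Qed.

Definition fA (n r : nat) : algC := w ^+ (n * r./2).
Definition fB (n r : nat) : algC := if odd r then fA n r else 0.
Definition vA n := cv (fA n).
Definition vB n := cv (fB n).

Lemma Nm_vA n : Nm *m vA n = vA n.
Proof.
apply/colP => r; rewrite Nm_mul !mxE /fA doubleK half21.
by case: (odd r) => /=; rewrite /nE; ring.
Qed.

Lemma Nm_vB n : Nm *m vB n = hh ^+ 2 *: (vA n - vB n).
Proof.
apply/colP => r; rewrite Nm_mul !mxE /fB /fA doubleK half21 odd_double odd21.
by case: (odd r) => /=; rewrite /nE; ring.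
Qed.

Lemma Mm_vA0 : Mm *m vA 0 = vA 0.
Proof.
apply/colP => r; rewrite Mm_mul !mxE /fA !mul0n !expr0.
case: ifP => // hk; rewrite /mE hk; case: (~~ odd r) => /=; ring.
Qed.

Lemma fA_o n j : fA n (j.*2.+1) = w ^+ (n * j).
Proof. by rewrite /fA half21. Qed.
Lemma fA_e n j : fA n (j.*2.+2) = w ^+ (n * j.+1).
Proof. by rewrite /fA /= doubleK. Qed.
Lemma fB_o n j : fB n (j.*2.+1) = w ^+ (n * j).
Proof. by rewrite /fB odd21 fA_o. Qed.
Lemma fB_e n j : fB n (j.*2.+2) = 0.
Proof. by rewrite /fB /= odd_double. Qed.
Lemma fA_0 n : fA n 0 = 1.
Proof. by rewrite /fA muln0 expr0. Qed.
Lemma fB_0 n : fB n 0 = 0.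
Proof. by []. Qed.

Lemma wpow_neq0 k : w ^+ k != 0.
Proof. by rewrite expf_neq0 // w_neq0. Qed.

Lemma row_cases (r : 'I_(D.*2)) :
  [\/ (r : nat) = 0 /\ r.+1./2 = 0,
      (r : nat) = D.-1.*2.+1 /\ r.+1./2 = D |
      exists j, [/\ (j.+1 < D)%N, r.+1./2 = j.+1 &
                 ((r : nat) = j.*2.+1 /\ odd r \/ (r : nat) = j.*2.+2 /\ ~~ odd r)]].
Proof.
case: r => r hr /=.
have := odd_double_half r.
case: (boolP (odd r)) => ho /= e.
  case: (ltnP r.+1 D.*2) => h.
    apply: Or33; exists r./2; split.
    - by move: h e; rewrite -!divn2 -!muln2; lia.
    - by move: e; rewrite -!divn2 -!muln2; lia.
    - by left; split => //; move: e; rewrite -!divn2 -!muln2; lia.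
  apply: Or32; split; move: h hr e; rewrite -!divn2 -!muln2; lia.
case: (posnP r) => r0; first by apply: Or31; split; rewrite r0.
apply: Or33; exists r./2.-1; split.
- move: hr e r0; rewrite -!divn2 -!muln2; lia.
- move: hr e r0; rewrite -!divn2 -!muln2; lia.
- right; split => //.
  move: hr e r0; rewrite -!divn2 -!muln2; lia.
Qed.

Lemma odd22 n : odd (n.*2.+2) = false.
Proof. by rewrite /= odd_double. Qed.

Lemma mE_int j a b : (j.+1 < D)%N -> mE j.+1 a b =
  match a, b with
  | false, false => Q ^+ D - Q ^+ j.+1 + 1
  | false, true => Q ^+ j.+1 - Q ^+ D
  | true, false => 1 - Q ^+ j.+1
  | true, true => Q ^+ j.+1
  end.
Proof.
move=> hj; rewrite /mE /=.
by have -> : (j.+1 == D) = false by apply/negbTE; rewrite neq_ltn hj.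
Qed.

Lemma QX k : Q ^+ k = (w ^+ k)^-1.
Proof. by rewrite Qw exprVn. Qed.
Lemma wMS m j : w ^+ (m.+1 * j) = w ^+ j * w ^+ m ^+ j.
Proof. by rewrite mulSn exprD exprM. Qed.
Lemma wMS2 m j : w ^+ (m.+1 * j.+1) = (w * w ^+ j) * (w ^+ m * w ^+ m ^+ j).
Proof. by rewrite mulSn mulnS !exprD exprS exprM. Qed.
Lemma wMj m j : w ^+ (m * j.+1) = w ^+ m * w ^+ m ^+ j.
Proof. by rewrite mulnS exprD exprM. Qed.

Lemma wwpow_neq0 m j : w ^+ m ^+ j != 0.
Proof. by rewrite expf_neq0 // wpow_neq0. Qed.

Ltac walg eD :=
  rewrite ?QX ?eD ?wMS2 ?wMS ?wMj ?exprS ?exprM;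
  field; by rewrite ?wwpow_neq0 ?wpow_neq0 ?w_neq0.

Lemma Mm_vA m : (m < D)%N ->
  Mm *m vA m.+1 = Q ^+ m.+1 *: vA m.+1 - (Q ^+ m.+1 - 1) *: vA m
     + ((Q ^+ m.+1 - 1) * (Q ^+ (D - m.+1) - 1)) *: vB m.+1
     + ((Q ^+ m.+1 - 1) * (1 - w ^+ m)) *: vB m.
Proof.
move=> hm; apply/colP => r; rewrite Mm_mul !mxE.
have eD : w ^+ D = w ^+ (D - m.+1) * (w * w ^+ m) by rewrite -exprS -exprD subnK.
case: (row_cases r) => [[h1 h2]|[h1 h2]|[j [hj h2 [[h1 ho]|[h1 ho]]]]];
  rewrite h2 ?eqxx ?orbT ?h1.
- by rewrite /= !fA_0 !fB_0; ring.
- have ej : w ^+ D.-1 = w ^+ (D - m.+1) * w ^+ m.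
    by rewrite -exprD; congr (w ^+ _); lia.
  rewrite !fA_o !fB_o ?QX ?wMS ?exprS ?exprM ej.
  field; by rewrite ?wwpow_neq0 ?wpow_neq0 ?w_neq0.
- have hjD : (j.+1 == D) = false by apply/negbTE; rewrite neq_ltn hj.
  rewrite hjD odd21 !(mE_int _ _ _ hj) doubleS /= ?fA_o ?fA_e ?fB_o ?fB_e.
  walg eD.
- have hjD : (j.+1 == D) = false by apply/negbTE; rewrite neq_ltn hj.
  rewrite hjD odd22 !(mE_int _ _ _ hj) doubleS /= ?fA_o ?fA_e ?fB_o ?fB_e.
  walg eD.
Qed.

Lemma vAB n : vA n - vB n = cv (fun r => fA n r - fB n r).
Proof. by apply/colP => r; rewrite !mxE. Qed.

Lemma Mm_vAB m : (m < D)%N ->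
  Mm *m (vA m.+1 - vB m.+1) =
    vA m - Q ^+ (D - m.+1) *: vB m.+1 - (1 - w ^+ m) *: vB m.
Proof.
move=> hm; rewrite vAB; apply/colP => r; rewrite Mm_mul !mxE.
have eD : w ^+ D = w ^+ (D - m.+1) * (w * w ^+ m) by rewrite -exprS -exprD subnK.
case: (row_cases r) => [[h1 h2]|[h1 h2]|[j [hj h2 [[h1 ho]|[h1 ho]]]]];
  rewrite h2 ?eqxx ?orbT ?h1.
- by rewrite /= !fA_0 !fB_0; ring.
- have ej : w ^+ D.-1 = w ^+ (D - m.+1) * w ^+ m.
    by rewrite -exprD; congr (w ^+ _); lia.
  rewrite !fA_o !fB_o ?QX ?wMS ?exprS ?exprM ej.
  field; by rewrite ?wwpow_neq0 ?wpow_neq0 ?w_neq0.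
- have hjD : (j.+1 == D) = false by apply/negbTE; rewrite neq_ltn hj.
  rewrite hjD odd21 !(mE_int _ _ _ hj) doubleS /= ?fA_o ?fA_e ?fB_o ?fB_e.
  walg eD.
- have hjD : (j.+1 == D) = false by apply/negbTE; rewrite neq_ltn hj.
  rewrite hjD odd22 !(mE_int _ _ _ hj) doubleS /= ?fA_o ?fA_e ?fB_o ?fB_e.
  walg eD.
Qed.

Definition X := Xmat q D e2.
Definition tauv := tau q D e2.

Lemma tau_eq : tauv = cc * hh^-1.
Proof.
rewrite /tauv /tau qp_neg qp_nat.
rewrite (exprD r4 (2 * D) e2) /cc invfM -/rho.
have -> : r4 ^+ e2 = hh by [].
by rewrite mulrA.
Qed.

Lemma tau_neq0 : tauv != 0.
Proof.
rewrite tau_eq /cc !mulf_neq0 ?invr_eq0 ?hh_neq0 ?rho_neq0 //.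
by rewrite neq0Ci.
Qed.

Lemma tauinv_eq n : (n <= D)%N -> tauv^-1 * Q ^- n = - (cc * hh * Q ^+ (D - n)).
Proof.
move=> hn; rewrite tau_eq /cc !invfM invCi invrK.
have Qn0 : Q ^+ n != 0 by rewrite expf_neq0 // Q_neq0.
have -> : Q ^+ (D - n) = rho ^+ 2 * (Q ^+ n)^-1.
  by rewrite rho2 -{2}(subnK hn) exprD mulfK.
have := rho_neq0; have := hh_neq0 => h1 h2.
field; by rewrite h1 h2 Qn0.
Qed.

Lemma X_vA n : X *m vA n = tauv *: (Mm *m vA n).
Proof.
by rewrite /X /Xmat tpmatE tmatE -mulmxA -!scalemxAl Nm_vA -scalemxAr tau_eq scalerA.
Qed.

Lemma X_vB n : X *m vB n = (cc * hh) *: (Mm *m (vA n - vB n)).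
Proof.
rewrite /X /Xmat tpmatE tmatE -mulmxA -!scalemxAl Nm_vB -!scalemxAr.
rewrite !scalerA; congr (_ *: _).
have := hh_neq0 => h; field; by rewrite h.
Qed.

Definition Fa n := X - (tauv * Q ^+ n)%:M.
Definition Fb n := X - (tauv^-1 * Q ^- n)%:M.
Definition F0 := X - tauv%:M.

Lemma RA0 : F0 *m vA 0 = 0.
Proof. by rewrite /F0 mulmxBl mul_scalar_mx X_vA Mm_vA0 subrr. Qed.

Lemma RA m : (m.+1 < D)%N -> Fa m.+1 *m vA m.+1 =
  tauv *: (- (Q ^+ m.+1 - 1) *: vA m
           + ((Q ^+ m.+1 - 1) * (Q ^+ (D - m.+1) - 1)) *: vB m.+1
           + ((Q ^+ m.+1 - 1) * (1 - w ^+ m)) *: vB m).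
Proof.
move=> hm; rewrite /Fa mulmxBl mul_scalar_mx X_vA Mm_vA; last by apply: ltnW.
by apply/colP => r; rewrite !mxE; ring.
Qed.

Lemma RB m : (m < D)%N -> Fb m.+1 *m vB m.+1 =
  (cc * hh) *: (vA m - (1 - w ^+ m) *: vB m).
Proof.
move=> hm; rewrite /Fb mulmxBl mul_scalar_mx X_vB Mm_vAB // tauinv_eq //.
by apply/colP => r; rewrite !mxE; ring.
Qed.

Lemma comm_Xs a : GRing.comm X a%:M.
Proof. by rewrite /GRing.comm -mulmxE scalar_mxC. Qed.

Lemma comm_ss a b : GRing.comm (a%:M : 'M[algC]_(D.*2)) b%:M.
Proof. by rewrite /GRing.comm -!mulmxE -!scalar_mxM mulrC. Qed.

Lemma comm_F a b : GRing.comm (X - a%:M) (X - b%:M).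
Proof.
have h1 : GRing.comm (X - a%:M) X.
  exact: (commr_sym (commrD (commr_refl X) (commrN (comm_Xs a)))).
have h2 : GRing.comm (X - a%:M) b%:M.
  exact: (commr_sym (commrD (commr_sym (comm_Xs b)) (commrN (comm_ss b a)))).
exact: (commrD h1 (commrN h2)).
Qed.

Definition Hm m := F0 * \prod_(1 <= n < m.+1) (Fa n * Fb n).

Lemma comm_Hm a m : GRing.comm (X - a%:M) (Hm m).
Proof.
apply: commrM; first exact: comm_F.
apply: commr_prod => n _; apply: commrM; exact: comm_F.
Qed.

Lemma kill_comm (H G : 'M[algC]_(D.*2)) (v : 'cV[algC]_(D.*2)) :
  GRing.comm H G -> H *m v = 0 -> H *m (G *m v) = 0.
Proof.
move=> c h; rewrite mulmxA.
have -> : H *m G = G *m H by move: c; rewrite /GRing.comm -mulmxE.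
by rewrite -mulmxA h mulmx0.
Qed.

Lemma mulM (H G : 'M[algC]_(D.*2)) (v : 'cV[algC]_(D.*2)) : (H * G) *m v = H *m (G *m v).
Proof. by rewrite -mulmxE mulmxA. Qed.

Lemma kill_Hm m : (m < D)%N ->
  (forall k, (k <= m)%N -> Hm m *m vA k = 0) /\
  (forall k, (0 < k <= m)%N -> Hm m *m vB k = 0).
Proof.
elim: m => [_|m IH hm].
  split => k; last by case: k.
  rewrite leqn0 => /eqP ->.
  by rewrite /Hm big_geq // mulr1 RA0.
have [IHA IHB] := IH (ltnW hm).
set H := Hm m.
have e : Hm m.+1 = H * (Fa m.+1 * Fb m.+1) by rewrite /Hm big_nat_recr //= mulrA.
have cF : GRing.comm H (Fa m.+1) by apply/commr_sym/comm_Hm.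
have cG : GRing.comm H (Fb m.+1) by apply/commr_sym/comm_Hm.
have cFG : GRing.comm H (Fa m.+1 * Fb m.+1) by apply: commrM.
have kvBm : H *m ((1 - w ^+ m) *: vB m) = 0.
  have [m0|mpos] := posnP m.
    by rewrite m0 expr0 subrr scale0r mulmx0.
  rewrite -scalemxAr (IHB m) ?scaler0 //; by rewrite mpos leqnn.
have kB : H *m (vA m - (1 - w ^+ m) *: vB m) = 0.
  by rewrite mulmxBr kvBm IHA // subr0.
have kGB : H *m (Fb m.+1 *m vB m.+1) = 0.
  by rewrite (RB m (ltnW hm)) -scalemxAr kB scaler0.
rewrite e; split => k hk.
- case: (ltngtP k m.+1) => hkm; last first.
  + rewrite hkm mulM.
    have -> : Fa m.+1 * Fb m.+1 = Fb m.+1 * Fa m.+1 by apply: comm_F.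
    rewrite mulM (RA m hm) -!scalemxAr !mulmxDr -!scalemxAr ?mulmxDr -?scalemxAr. rewrite kGB.
    rewrite (@kill_comm _ _ _ cG (IHA m (leqnn m))).
    have [m0|mpos] := posnP m.
      by rewrite !scaler0 m0 expr0 subrr mulr0 scale0r !addr0 scaler0.
    rewrite (@kill_comm _ _ _ cG (IHB m _)); last by rewrite mpos leqnn.
    by rewrite !scaler0 !addr0 scaler0.
  + by move: hk; rewrite leqNgt hkm.
  + rewrite mulM; apply: kill_comm => //; exact: IHA.
- case/andP: hk => hk0 hk; case: (ltngtP k m.+1) => hkm; last first.
  + by rewrite hkm mulM mulM; apply: kill_comm.
  + by move: hk; rewrite leqNgt hkm.
  + rewrite mulM; apply: kill_comm => //; apply: IHB; by rewrite hk0.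
Qed.

Definition Rm := Hm D.-1 * Fb D.

Lemma kill_R :
  (forall k, (k < D)%N -> Rm *m vA k = 0) /\
  (forall k, (0 < k <= D)%N -> Rm *m vB k = 0).
Proof.
have hD : (D.-1 < D)%N by rewrite prednK.
have [IHA IHB] := kill_Hm (D.-1) hD.
set H := Hm D.-1.
have cG : GRing.comm H (Fb D) by apply/commr_sym/comm_Hm.
have RBD := RB (D.-1) hD; rewrite (prednK D_gt0) in RBD.
have kvBm : H *m ((1 - w ^+ D.-1) *: vB D.-1) = 0.
  have [m0|mpos] := posnP D.-1.
    by rewrite m0 expr0 subrr scale0r mulmx0.
  rewrite -scalemxAr (IHB D.-1) ?scaler0 //; by rewrite mpos leqnn.
have kB : H *m (vA D.-1 - (1 - w ^+ D.-1) *: vB D.-1) = 0.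
  by rewrite mulmxBr kvBm IHA // subr0.
split => k hk; rewrite /Rm mulM.
- by apply: kill_comm => //; apply: IHA; rewrite -ltnS prednK.
- case/andP: hk => hk0 hk.
  case: (ltngtP k D) => hkm; last first.
  + by rewrite hkm RBD -scalemxAr kB scaler0.
  + by move: hk; rewrite leqNgt hkm.
  + by apply: kill_comm => //; apply: IHB; rewrite hk0 -ltnS prednK.
Qed.

Lemma sum_pairs n (F : nat -> algC) :
  \sum_(c < n.*2) F c = \sum_(i < n) (F i.*2 + F i.*2.+1).
Proof.
elim: n => [|n IH]; first by rewrite !big_ord0.
rewrite -!(big_mkord xpredT) in IH *.
rewrite doubleS !big_nat_recr //= IH big_ord_recr /= addrA.
done.
Qed.

Lemma w_inj i j : (i < j)%N -> w ^+ i != w ^+ j.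
Proof.
move=> hij; apply/eqP => e.
have h : w ^+ (j - i) = 1.
  apply: (mulfI (wpow_neq0 i)); by rewrite -exprD subnKC ?(ltnW hij) // mulr1 e.
have : Q ^+ (j - i) = 1 by rewrite QX h invr1.
move/eqP; rewrite /Q -natrX pnatr_eq1 => /eqP e1.
have := ltn_expl (j - i) q_gt1; rewrite e1 => h1.
move: h1 hij; lia.
Qed.

Definition xr : 'rV[algC]_D := \row_(i < D) w ^+ i.
Definition V0 : 'M[algC]_D := \matrix_(i < D, k < D) (w ^+ i) ^+ k.
Definition V1 : 'M[algC]_D := \matrix_(i < D, k < D) (w ^+ i) ^+ k.+1.

Lemma V0_unit : V0 \in unitmx.
Proof.
have -> : V0 = (Vandermonde D xr)^T by apply/matrixP => i k; rewrite !mxE.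
rewrite unitmxE det_tr det_Vandermonde unitfE.
apply/prodf_neq0 => i _; apply/prodf_neq0 => j hij.
by rewrite !mxE subr_eq0 eq_sym w_inj.
Qed.

Lemma V1_unit : V1 \in unitmx.
Proof.
have -> : V1 = diag_mx xr *m V0.
  by apply/matrixP => i k; rewrite mul_diag_mx !mxE exprS.
rewrite unitmxE det_mulmx det_diag unitfE mulf_neq0 //; last first.
  by rewrite -unitfE -unitmxE V0_unit.
by apply/prodf_neq0 => i _; rewrite mxE wpow_neq0.
Qed.

Lemma span0 (R : 'M[algC]_(D.*2)) :
  (forall k, (k < D)%N -> R *m vA k = 0) ->
  (forall k, (0 < k <= D)%N -> R *m vB k = 0) -> R = 0.
Proof.
move=> hA hB.
have ent : forall (f : nat -> algC) (r : 'I_(D.*2)), (R *m cv f) r 0 =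
   \sum_(i < D) (R r (insubd r i.*2) * f i.*2 + R r (insubd r i.*2.+1) * f i.*2.+1).
  move=> f r; rewrite mxE.
  rewrite (eq_bigr (fun c : 'I_(D.*2) => R r (insubd r c) * f c)); last first.
    by move=> c _; rewrite valKd mxE.
  by rewrite (sum_pairs D (fun c => R r (insubd r c) * f c)).
pose Ro : 'M[algC]_(D.*2, D) := \matrix_(r, i) R r (insubd r i.*2.+1).
pose Re : 'M[algC]_(D.*2, D) := \matrix_(r, i) R r (insubd r i.*2).
have Ro0 : Ro = 0.
  have h : Ro *m V1 = 0.
    apply/matrixP => r k; rewrite !mxE.
    have := hB k.+1 (ltn_ord k).
    move/(congr1 (fun M : 'cV[algC]_(D.*2) => M r 0)); rewrite /vB ent mxE => h2.
    apply: etrans h2; apply: eq_bigr => i _.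
    by rewrite /Ro !mxE /fB odd_double odd21 /fA half21 mulr0 add0r -exprM mulnC.
  by rewrite -(mulmxK V1_unit Ro) h mul0mx.
have RoE : forall r (i : 'I_D), R r (insubd r i.*2.+1) = 0.
  by move=> r i; have := congr1 (fun M : 'M[algC]_(D.*2, D) => M r i) Ro0; rewrite /Ro !mxE.
have Re0 : Re = 0.
  have h : Re *m V0 = 0.
    apply/matrixP => r k; rewrite !mxE.
    have := hA k (ltn_ord k).
    move/(congr1 (fun M : 'cV[algC]_(D.*2) => M r 0)); rewrite /vA ent mxE => h2.
    apply: etrans h2; apply: eq_bigr => i _.
    by rewrite /Re !mxE RoE mul0r addr0 /fA doubleK -exprM mulnC.
  by rewrite -(mulmxK V0_unit Re) h mul0mx.
have ReE : forall r (i : 'I_D), R r (insubd r i.*2) = 0.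
  by move=> r i; have := congr1 (fun M : 'M[algC]_(D.*2, D) => M r i) Re0; rewrite /Re !mxE.
apply/matrixP => r c; rewrite mxE.
have hc := odd_double_half c.
have hi : (c./2 < D)%N by rewrite ltn_half_double.
case: (boolP (odd c)) => ho.
  transitivity (R r (insubd r (Ordinal hi).*2.+1)); last exact: RoE.
  congr (R r _); apply: val_inj; rewrite val_insubd /=.
  have e1 : c./2.*2.+1 = c by rewrite -[in RHS]hc ho.
  by rewrite e1 ltn_ord.
transitivity (R r (insubd r (Ordinal hi).*2)); last exact: ReE.
congr (R r _); apply: val_inj; rewrite val_insubd /=.
have e1 : c./2.*2 = c by rewrite -[in RHS]hc (negbTE ho).
by rewrite e1 ltn_ord.
Qed.

Lemma Rm0 : Rm = 0.
Proof. by have [hA hB] := kill_R; apply: span0. Qed.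

Lemma comm_iX : GRing.comm (invmx X) X.
Proof.
case: (boolP (X \in unitmx)) => hu.
  by rewrite /GRing.comm -mulmxE mulVmx // mulmxV.
by rewrite invmx_out ?inE //; apply: commr_refl.
Qed.

Lemma comm_inv a : GRing.comm (invmx X) (X - a%:M).
Proof.
apply: commrD; first exact: comm_iX.
by apply: commrN; rewrite /GRing.comm -mulmxE scalar_mxC.
Qed.

Lemma main_sec : p_perp q D e2 (Xmat q D e2) * h_perp q D e2 (Xmat q D e2) = 0.
Proof.
change (invmx X * (F0 * Fb D) * (invmx X ^+ (D - 1) * \prod_(1 <= n < D) (Fa n * Fb n)) = 0).
set P := \prod_(1 <= n < D) (Fa n * Fb n).
have c1 : GRing.comm (F0 * Fb D) (invmx X ^+ (D - 1)).
  by apply: commrX; apply: commr_sym; apply: commrM; apply: comm_inv.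
have c2 : GRing.comm (Fb D) P.
  apply: commr_prod => n _; apply: commrM; exact: comm_F.
have eR : F0 * Fb D * P = Rm.
  by rewrite /Rm /Hm (prednK D_gt0) -/P -mulrA c2 mulrA.
by rewrite -mulrA [_ * (_ * P)]mulrA c1 -mulrA eR Rm0 !mulr0.
Qed.
End Main.

Theorem lemma9p4 (q D e2 : nat) :
  prime_power q -> (3 <= D)%N -> (e2 <= 4)%N ->
  (odd e2 -> exists r : nat, q = (r ^ 2)%N) ->
  p_perp q D e2 (Xmat q D e2) * h_perp q D e2 (Xmat q D e2) = 0.
Proof.
move=> [p [k [pp [k0 ->]]]] hD _ _.
apply: main_sec; last by apply: leq_trans hD.
have p1 := prime_gt1 pp.
have := ltn_expl k p1; move: k0; lia.
Qed.
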